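(* Let $p$ be an odd prime, $m$ a positive integer, $G$ a cyclic group of order $p^m$ (written additively), and $\mathcal A=\mathcal O(K,G)$ the orbit S-ring of a subgroup $K\le\mathrm{Aut}(G)$. If $p$ divides $|K|$, then $G^{(p^{m-1})}\le\mathrm{rad}(\mathcal A)$. In particular, $\mathcal A$ is not free.
   Context: An S-ring over a finite group $G$ is a subring $\mathcal A\subseteq\mathbb{Z}[G]$ with $\mathbb{Z}$-basis $\{\underline X:X\in\mathcal S\}$ for a partition $\mathcal S$ of $G$ (the basic sets) with $\{0\}\in\mathcal S$ and $X^{(-1)}\in\mathcal S$ for all $X\in\mathcal S$, where $\underline X=\sum_{x\in X}x$. For $K\le\mathrm{Aut}(G)$, $\mathcal O(K,G)$ is the S-ring whose basic sets are the $K$-orbits on $G$. For $X\subseteq G$ and an integer $m$, $X^{(m)}=\{mx:x\in X\}$. The radical of a set $X$ is $\mathrm{rad}(X)=\{g\in G:g+X=X\}$. For an S-ring $\mathcal A$ over a cyclic group $G$, $\mathrm{rad}(\mathcal A)$ is $\mathrm{rad}(X)$ for any basic set $X$ generating $G$ (this does not depend on the choice of $X$), and $\mathcal A$ is free if $\mathrm{rad}(\mathcal A)=\{0\}$. *)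

(* Defs.v *)
From mathcomp Require Import all_boot all_fingroup all_solvable.
Set Implicit Arguments.
Unset Strict Implicit.
Unset Printing Implicit Defensive.
Local Open Scope group_scope.

(* The group G is a finite group written multiplicatively (mathcomp convention);
   the paper's additive x + X becomes the coset x *: X and m x becomes x ^+ m. *)

Definition rad (gT : finGroupType) (G X : {set gT}) : {set gT} :=
  [set g in G | g *: X == X].

Definition basic_set (gT : finGroupType) (G : {set gT})
    (K : {set {perm gT}}) (X : {set gT}) : Prop :=
  exists2 x, x \in G & X = orbit 'P K x.

Definition mulset (gT : finGroupType) (G : {set gT}) (n : nat) : {set gT} :=
  [set x ^+ n | x in G].

(* Main.v *)
Require Import Defs.
From mathcomp Require Import all_boot all_fingroup all_solvable.
Local Open Scope group_scope.

Theorem lemma4p7 (gT : finGroupType) (G : {group gT}) (p m : nat)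
    (K : {group {perm gT}}) :
  prime p -> odd p -> 0 < m ->
  cyclic G -> #|G| = (p ^ m)%N ->
  K \subset Aut G ->
  p %| #|K| ->
  forall X : {set gT}, basic_set G K X -> <<X>> = G ->
    mulset G (p ^ m.-1)%N \subset rad G X /\ rad G X != 1.
Proof.
move=> pr_p odd_p m_gt0 cycG oG sKA pK X [x Gx defX] genX.
have p_gt1 := prime_gt1 pr_p.
have pG : p.-group G by rewrite /pgroup oG pnatX pnat_id.
have ntG : G :!=: 1.
  by rewrite trivg_card1 oG -(expn0 p) eqn_exp2l // -lt0n.
have [mm [[def_m _ _ _ _] _]] := cyclic_pgroup_Aut_structure pG cycG ntG.
rewrite {1}oG pfactorK //=.
have oA : #|Aut G| = (p.-1 * p ^ m.-1)%N.
  by rewrite card_Aut_cyclic // oG totient_pfactor.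
case: eqP => [m1 | nm1].
  exfalso.
  have : p %| p.-1.
    by rewrite -(muln1 p.-1) -(expn0 p) -m1 -oA (dvdn_trans pK) ?cardSg.
  move/dvdn_leq; case: (p) p_gt1 => [|[|k]] //= _ H.
  by have := H isT; rewrite ltnn.
move=> [t [_ _ _]]; rewrite odd_p => -[[_ cycP] _ [s0 [As0 os0 ms0 defO]]].
have Hl : logn p #|G| = m by rewrite oG pfactorK.
rewrite Hl in ms0.
set n := m.-1 in oA ms0 *.
have n_gt0 : 0 < n by rewrite lt0n; apply/eqP.
have [tau Ktau otau] := Cauchy pr_p pK.
have Atau : tau \in Aut G by apply: (subsetP sKA).
have sP : <[tau]> \subset 'O_p(Aut G).
  apply: pcore_max.
    by rewrite /pgroup -orderE otau pnat_id.
  by rewrite -sub_abelian_normal ?cycle_subG // Aut_cyclic_abelian.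
have s0P : <[s0]> \subset 'O_p(Aut G) by rewrite -defO Ohm_sub.
have eqs : <[tau]> = <[s0]> :> {set _}.
  by apply/eqP; rewrite (eq_subG_cyclic cycP sP s0P) -!orderE otau os0.
have Ks0 : s0 \in K.
  by apply: (subsetP (_ : <[tau]> \subset K)); rewrite ?cycle_subG // eqs cycle_id.
have AK : forall a, a \in K -> a \in Aut G by move=> a; apply: (subsetP sKA).
have XG : forall z, z \in X -> z \in G.
  by move=> z; rewrite defX => /orbitP [a Ka <-]; exact: (Aut_closed (AK a Ka) Gx).
have orbX : forall z, z \in X -> orbit 'P K z = X.
  by move=> z Xz; rewrite defX; apply/eqP; rewrite orbit_eq_mem -defX.
have genz : forall z, z \in X -> <[z]> = G.
  move=> z Xz; apply/eqP; rewrite eqEsubset cycle_subG XG //=; rewrite -{1}genX.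
  rewrite gen_subG; apply/subsetP => y; rewrite -(orbX z Xz) => /orbitP [a Ka <-].
  by change (a z \in <[z]>); rewrite -(def_m a z) ?AK ?XG // mem_cycle.
have oz : forall z, z \in X -> #[z] = (p ^ m)%N by move=> z /genz; rewrite /order => ->.
have s0E : forall y, y \in G -> s0 y = y * y ^+ (p ^ n).
  by move=> y Gy; rewrite -def_m // ms0 expg_znat // expgS.
have s0fix : forall y, y \in G -> s0 (y ^+ (p ^ n)) = y ^+ (p ^ n).
  move=> y Gy; rewrite s0E ?groupX // -expgM.
  have -> : y ^+ (p ^ n * p ^ n) = 1.
    apply/eqP; rewrite -order_dvdn (dvdn_trans (order_dvdG Gy)) // oG -expnD.
    rewrite dvdn_Pexp2l //; move: n_gt0; rewrite /n; case: (m) => // k /= kp; rewrite -addn1 leq_add2l; exact: kp.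
  by rewrite mulg1.
have s0M := morphicP (Aut_morphic As0).
have iter : forall z i, z \in G -> (s0 ^+ i) z = z * (z ^+ (p ^ n)) ^+ i.
  move=> z i Gz; elim: i => [|i IH]; first by rewrite expg0 perm1 mulg1.
  rewrite expgSr permM IH s0M ?groupX // s0E // -expgAC s0fix ?groupX //.
  by rewrite expgAC -mulgA -expgS.
have radX : forall h, h \in G -> h ^+ (p ^ n) \in rad G X.
  move=> h Gh; rewrite inE groupX //=.
  rewrite eqEcard card_lcoset leqnn andbT; apply/subsetP => y /lcosetP [z Xz ->].
  have : h \in <[z]> by rewrite genz.
  case/cycleP => i ->.
  rewrite -expgM -expgSr mulnC expgS expgM -iter ?XG //.
  by rewrite -(orbX z Xz) (mem_orbit 'P) // groupX.
have Xx : x \in X by rewrite defX orbit_refl.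
split.
  by apply/subsetP => g /imsetP [h Gh ->]; apply: radX.
apply/negP => /eqP r1; have := radX x Gx; rewrite r1 inE => /eqP.
move/eqP; rewrite -order_dvdn oz // dvdn_Pexp2l //.
by rewrite /n; case: (m) m_gt0 => // k _ /=; rewrite ltnn.
Qed.
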